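(* For every bimodal model $\mathcal{M}=\langle S,R_1,R_2,V\rangle$ there exist a serial bimodal model $\mathcal{M}'$ (both relations serial) and a surjective $\boxdot$-morphism $g$ from $\mathcal{M}'$ onto $\mathcal{M}$; consequently, for every state $x$ of $\mathcal{M}'$ and every $\phi\in\mathcal{L}(\boxdot)$, $\mathcal{M}',x\vDash\phi$ iff $\mathcal{M},g(x)\vDash\phi$, and every state of $\mathcal{M}$ is of the form $g(x)$.
   Context: Fix a nonempty set $\mathbf{P}$ of propositional variables. A bimodal model is $\langle S,R_1,R_2,V\rangle$ with $S$ nonempty, $R_1,R_2\subseteq S\times S$, $V:\mathbf{P}\to\mathcal{P}(S)$. $\mathcal{L}(\boxdot):\ \phi::=p\mid\neg\phi\mid(\phi\wedge\phi)\mid\boxdot\phi$, with $\mathcal{M},s\vDash\boxdot\phi$ iff for all $t,u$ with $sR_1t$ and $sR_2u$, ($\mathcal{M},t\vDash\phi\iff\mathcal{M},u\vDash\phi$); atoms and Booleans as usual. A function $f:S\to S'$ is a $\boxdot$-morphism from $\langle S,R_1,R_2,V\rangle$ to $\langle S',R_1',R_2',V'\rangle$ if for all $x\in S$: (Var) $x\in V(p)$ iff $f(x)\in V'(p)$ for all $p$; (Forth) for all $y,z\in S$, if $xR_1y$, $xR_2z$ and $f(y)\neq f(z)$, then $f(x)R_1'f(y)$ and $f(x)R_2'f(z)$; (Back) for all $y',z'\in S'$, if $f(x)R_1'y'$, $f(x)R_2'z'$ and $y'\neq z'$, then there are $y,z\in S$ with $xR_1y$, $xR_2z$, $f(y)=y'$,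 $f(z)=z'$. *)

(* Defs.v *)
From Stdlib Require Import Classical.

Set Implicit Arguments.

Record model (P : Type) (S : Type) : Type := Model {
  m_inhabited : inhabited S;
  R1 : S -> S -> Prop;
  R2 : S -> S -> Prop;
  V : P -> S -> Prop
}.

Inductive form (P : Type) : Type :=
| Var : P -> form P
| Neg : form P -> form P
| And : form P -> form P -> form P
| Bdot : form P -> form P.

Arguments Var {P} _.
Arguments Neg {P} _.
Arguments And {P} _ _.
Arguments Bdot {P} _.

Fixpoint sat {P S : Type} (M : model P S) (s : S) (phi : form P) : Prop :=
  match phi with
  | Var p => V M p s
  | Neg f => ~ sat M s f
  | And f g => sat M s f /\ sat M s g
  | Bdot f => forall t u, R1 M s t -> R2 M s u -> (sat M t f <-> sat M u f)
  end.

Definition serial {S : Type} (R : S -> S -> Prop) : Prop :=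
  forall x, exists y, R x y.

Definition serial_model {P S : Type} (M : model P S) : Prop :=
  serial (R1 M) /\ serial (R2 M).

Definition bdot_morphism {P S S' : Type} (M : model P S) (M' : model P S')
  (f : S -> S') : Prop :=
  forall x : S,
    (forall p, V M p x <-> V M' p (f x)) /\
    (forall y z, R1 M x y -> R2 M x z -> f y <> f z ->
       R1 M' (f x) (f y) /\ R2 M' (f x) (f z)) /\
    (forall y' z', R1 M' (f x) y' -> R2 M' (f x) z' -> y' <> z' ->
       exists y z, R1 M x y /\ R2 M x z /\ f y = y' /\ f z = z').

(* Main.v *)
Require Import Defs.
From Stdlib Require Import Classical.

Section C.
Variables (P S : Type) (M : model P S).
Definition D (x : S) : Prop := (exists a, R1 M x a) /\ (exists b, R2 M x b).
Definition M' : model P S :=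
  Model (m_inhabited M)
    (fun x y => (D x /\ R1 M x y) \/ (~ D x /\ y = x))
    (fun x y => (D x /\ R2 M x y) \/ (~ D x /\ y = x))
    (V M).

Lemma sat_eq : forall phi x, sat M' x phi <-> sat M x phi.
Proof.
  induction phi; intro x; simpl.
  - tauto.
  - rewrite IHphi; tauto.
  - rewrite IHphi1, IHphi2; tauto.
  - destruct (classic (D x)) as [Hd|Hd].
    + split; intros H t u H1 H2.
      * rewrite <- !IHphi. apply H; left; auto.
      * rewrite !IHphi. destruct H1 as [[_ H1]|[Hn _]]; [|tauto].
        destruct H2 as [[_ H2]|[Hn _]]; [|tauto]. auto.
    + split; intros H t u H1 H2.
      * exfalso; apply Hd; split; eauto.
      * destruct H1 as [[Hc _]|[_ ->]]; [tauto|].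
        destruct H2 as [[Hc _]|[_ ->]]; [tauto|]. tauto.
Qed.
End C.

Theorem mainTheorem10 (P : Type) (HP : inhabited P) (S : Type) (M : model P S) :
  exists (S' : Type) (M' : model P S') (g : S' -> S),
    serial_model M' /\
    bdot_morphism M' M g /\
    (forall s : S, exists x : S', g x = s) /\
    (forall (x : S') (phi : form P), sat M' x phi <-> sat M (g x) phi).
Proof.
  exists S, (@M' P S M), (fun x => x).
  split; [|split; [|split]].
  - split; intro x; simpl; destruct (classic (@D P S M x)) as [Hd|Hd].
    + destruct Hd as [[a Ha] Hb]. exists a; left; split; [split|]; eauto.
    + exists x; right; auto.
    + destruct Hd as [Ha [b Hb]]. exists b; left; split; [split|]; eauto.
    + exists x; right; auto.
  - intro x; simpl. split; [tauto|split].
    + intros y z H1 H2 Hne.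
      destruct H1 as [[Hd1 H1]|[Hn ->]]; destruct H2 as [[Hd2 H2]|[Hn' ->]]; tauto.
    + intros y z H1 H2 Hne. exists y, z.
      destruct (classic (@D P S M x)) as [Hd|Hd].
      * repeat split; auto; left; auto.
      * exfalso; apply Hd; split; eauto.
  - intro s; exists s; reflexivity.
  - intros; apply sat_eq.
Qed.
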